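(* Let $n\ge1$, $d\ge1$, and let $CC(n,d)=\mathrm{conv}\{\overline{\alpha}_L: L\text{ a corner cut staircase in }d\text{ dimensions of size }n\}$ be the corner cut polytope, where $\overline{\alpha}_L=\sum_{\alpha\in L}\alpha$. Then: (i) for each $i$, the intersection of $CC(n,d)$ with the $i$-th coordinate axis is the point $\binom{n}{2}e_i$ (where $e_i$ is the $i$-th standard basis vector); (ii) if $n=\binom{k+d-1}{d}$ for some integer $k\ge1$, then the corner cut polytope is pointed, in the sense that the staircase of all exponents of total degree at most $k-1$ is a corner cut of size $n$ whose point $\overline{\alpha}_L$ is a vertex of $CC(n,d)$.
   Context: A staircase is a finite set $L\subset\mathbb{Z}^d_{\ge0}$ such that $\alpha\in L$ and $\beta\le\alpha$ componentwise imply $\beta\in L$. A staircase $L$ is a corner cut if there is a $(d-1)$-dimensional affine hyperplane separating $L$ from its complement $\mathbb{Z}^d_{\ge0}\setminus L$. *)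

(* Defs.v *)
From HB Require Import structures.
From mathcomp Require Import all_boot all_order all_algebra.
From mathcomp Require Import finmap.
From mathcomp Require Import reals.

Set Implicit Arguments.
Unset Strict Implicit.
Unset Printing Implicit Defensive.

Import Order.TTheory GRing.Theory Num.Theory.
Local Open Scope fset_scope.
Local Open Scope ring_scope.

Definition exponent (d : nat) := {ffun 'I_d -> nat}.

Definition staircase (d : nat) (L : {fset exponent d}) : Prop :=
  forall a b : exponent d, a \in L -> (forall i, (b i <= a i)%N) -> b \in L.

Definition lin (R : realType) (d : nat) (c : 'I_d -> R) (a : exponent d) : R :=
  \sum_(i < d) c i * (a i)%:R.

Definition corner_cut (R : realType) (d : nat) (L : {fset exponent d}) : Prop :=
  staircase L /\
  exists (c : 'I_d -> R) (b : R),
    (exists i, c i != 0) /\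
    (forall a : exponent d, a \in L -> lin c a < b) /\
    (forall a : exponent d, a \notin L -> b < lin c a).
Arguments corner_cut R d L : clear implicits.

Definition alphabar (R : realType) (d : nat) (L : {fset exponent d}) : 'rV[R]_d :=
  \row_(i < d) \sum_(a <- L) ((a i)%:R : R).
Arguments alphabar R d L : clear implicits.

Definition in_CC (R : realType) (n d : nat) (x : 'rV[R]_d) : Prop :=
  exists (m : nat) (Ls : 'I_m -> {fset exponent d}) (w : 'I_m -> R),
    (forall j, corner_cut R d (Ls j) /\ #|` Ls j| = n) /\
    (forall j, 0 <= w j) /\
    \sum_(j < m) w j = 1 /\
    x = \sum_(j < m) w j *: alphabar R d (Ls j).

Arguments in_CC R n d x : clear implicits.

Definition rdot (R : realType) (d : nat) (c x : 'rV[R]_d) : R :=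
  \sum_(i < d) c 0 i * x 0 i.

Definition is_vertex_CC (R : realType) (n d : nat) (v : 'rV[R]_d) : Prop :=
  in_CC R n d v /\
  exists c : 'rV[R]_d,
    forall x, in_CC R n d x -> x != v -> rdot c v < rdot c x.

Arguments is_vertex_CC R n d v : clear implicits.

(* Main.v *)
Require Import Defs.
From HB Require Import structures.
From mathcomp Require Import all_boot all_order all_algebra.
From mathcomp Require Import finmap.
From mathcomp Require Import reals.
From mathcomp Require Import zify ring lra.
Set Implicit Arguments.
Unset Strict Implicit.
Import Order.TTheory GRing.Theory Num.Theory.
Local Open Scope fset_scope.
Local Open Scope ring_scope.

Definition incrh (s : seq nat) : seq nat := if s is t :: s' then t.+1 :: s' else [::].

Fixpoint E (d m : nat) : seq (seq nat) :=
  match d with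
  | 0 => [:: [::]]
  | d'.+1 => (fix F m := match m with
              | 0 => [seq 0%N :: s | s <- E d' 0]
              | m'.+1 => [seq 0%N :: s | s <- E d' m'.+1] ++ [seq incrh s | s <- F m']
              end) m
  end.

Lemma memE d m s : s \in E d m <-> size s = d /\ (sumn s <= m)%N.
Proof.
elim: d m s => [|d IHd] m s.
  rewrite /= inE; split; first by move/eqP->.
  by case=> /size0nil ->.
elim: m s => [|m IHm] s /=.
  split.
    by case/mapP=> x /IHd [hx hs] -> /=; rewrite hx.
  case: s => [|t s] /= [hs hsum] //; case: hs => hs.
  apply/mapP; exists s; first by apply/IHd; split => //; lia.
  congr cons; lia.
rewrite mem_cat; split.
  case/orP => /mapP [x hx ->].
    by move: hx => /IHd [hx hs] /=; rewrite hx.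
  move: hx => /IHm [].
  by case: x => [|u x] //= [->] hs; split => //; lia.
case: s => [|t s] /= [hs hsum] //; case: hs => hs.
case: t hsum => [|t] hsum.
  apply/orP; left; apply/mapP; exists s => //; apply/IHd; split => //.
apply/orP; right; apply/mapP; exists (t :: s) => //; apply/IHm; split => /=.
  by rewrite hs.
lia.
Qed.

Lemma uniqE d m : uniq (E d m).
Proof.
elim: d m => [|d IHd] m //.
elim: m => [|m IHm] /=.
  by rewrite map_inj_uniq // => x y [].
rewrite cat_uniq map_inj_uniq ?IHd; last by move=> x y [].
rewrite map_inj_in_uniq ?IHm ?andbT; last first.
  move=> x y Hx Hy; have [hx _] := (memE d.+1 m x).1 Hx; have [hy _] := (memE d.+1 m y).1 Hy.
  by case: x hx {Hx} => [|u x] //; case: y hy {Hy} => [|v y] // _ _ /= [-> ->].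
apply/hasPn => y /mapP [x Hx ->]; have [hx _] := (memE d.+1 m x).1 Hx.
case: x hx {Hx} => [|u x] //= _; apply/negP => /mapP [z _] //.
Qed.

Lemma sizeE d m : size (E d m) = 'C(m + d, d).
Proof.
elim: d m => [|d IHd] m; first by rewrite bin0.
elim: m => [|m IHm] /=; first by rewrite size_map IHd !add0n !binn.
rewrite size_cat !size_map IHd IHm.
by rewrite addnS addSn binS addnS addSn addnC.
Qed.

Definition tofun d (s : seq nat) : exponent d := [ffun i : 'I_d => nth 0%N s (nat_of_ord i)].
Definition deg d (a : exponent d) : nat := (\sum_(i < d) a i)%N.
Definition simplex d m : {fset exponent d} := [fset tofun d s | s in E d m].

Lemma toseq_sum d (a : exponent d) : sumn (map a (enum 'I_d)) = deg a.
Proof. by rewrite /deg sumnE big_map big_enum. Qed.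

Lemma tofun_toseq d (a : exponent d) : tofun d (map a (enum 'I_d)) = a.
Proof.
apply/ffunP => i; rewrite ffunE (nth_map i) ?size_enum_ord //.
by rewrite nth_ord_enum.
Qed.

Lemma toseq_tofun d s : size s = d -> map (tofun d s) (enum 'I_d) = s.
Proof.
move=> hs; apply: (@eq_from_nth _ 0%N); first by rewrite size_map size_enum_ord.
move=> k; rewrite size_map size_enum_ord => hk.
by rewrite (nth_map (Ordinal hk)) ?size_enum_ord // ffunE nth_enum_ord.
Qed.

Lemma mem_simplex d m (a : exponent d) : (a \in simplex d m) = (deg a <= m)%N.
Proof.
apply/idP/idP.
  case/imfsetP => s /= hs ->; have [hsz hsum] := (memE d m s).1 hs.
  by rewrite -toseq_sum toseq_tofun.
move=> ha; apply/imfsetP; exists (map a (enum 'I_d)); last by rewrite tofun_toseq.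
by apply/memE; rewrite size_map size_enum_ord toseq_sum.
Qed.

Lemma card_simplex d m : #|` simplex d m| = 'C(m + d, d).
Proof.
rewrite card_in_imfset.
  rewrite -sizeE; apply: perm_size; apply: uniq_perm.
  - exact: enum_finmem_uniq.
  - exact: uniqE.
  by move=> x; rewrite enum_finmemE.
move=> x y hx hy hxy.
have [hx' _] := (memE d m x).1 hx; have [hy' _] := (memE d m y).1 hy.
by rewrite -(toseq_tofun hx') -(toseq_tofun hy') hxy.
Qed.

Lemma lin_nat (R : realType) d (w : 'I_d -> nat) (a : exponent d) :
  lin (fun j => ((w j)%:R : R)) a = ((\sum_j w j * a j)%N)%:R.
Proof. by rewrite /lin natr_sum; apply: eq_bigr => j _; rewrite natrM. Qed.

Lemma simplex_cc (R : realType) d m : (1 <= d)%N -> corner_cut R d (simplex d m).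
Proof.
move=> hd; split.
  move=> a b; rewrite !mem_simplex => ha hb; apply: leq_trans ha.
  by apply: leq_sum => i _.
exists (fun _ => ((1%N)%:R : R)), (m%:R + 2^-1); split.
  by exists (Ordinal hd); rewrite oner_neq0.
have E1 a : lin (fun _ => ((1%N)%:R : R)) a = (deg a)%:R.
  by rewrite /lin /deg natr_sum; apply: eq_bigr => j _; rewrite mul1r.
have h2 : (0 : R) < 2^-1 by rewrite invr_gt0 ltr0n.
have h2' : (2^-1 : R) < 1 by rewrite invf_lt1 ?ltr0n // ltr1n.
split=> a; rewrite E1 mem_simplex => ha.
  have : (deg a)%:R <= (m%:R : R) by rewrite ler_nat.
  lra.
have : (m.+1)%:R <= ((deg a)%:R : R) by rewrite ler_nat ltnNge.
rewrite -addn1 natrD; lra.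
Qed.

Definition ax d (i : 'I_d) (t : nat) : exponent d :=
  [ffun j => if j == i then t else 0%N].
Definition A d (i : 'I_d) n : {fset exponent d} := [fset ax i t | t in iota 0 n].

Lemma ax_inj d (i : 'I_d) : injective (ax i).
Proof. by move=> s t /ffunP /(_ i); rewrite !ffunE eqxx. Qed.

Lemma mem_A d (i : 'I_d) n (b : exponent d) :
  b \in A i n <-> (forall j, j != i -> b j = 0%N) /\ (b i < n)%N.
Proof.
split.
  case/imfsetP => t /=; rewrite mem_iota add0n => ht ->.
  split; last by rewrite ffunE eqxx.
  by move=> j /negbTE hj; rewrite ffunE hj.
case=> h1 h2; apply/imfsetP; exists (b i); first by rewrite /= mem_iota.
apply/ffunP => j; rewrite ffunE; case: eqP => [->//|/eqP]; exact: h1.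
Qed.

Lemma card_A d (i : 'I_d) n : #|` A i n| = n.
Proof.
rewrite card_imfset; last exact: ax_inj.
rewrite -{2}(size_iota 0 n); apply: perm_size; apply: uniq_perm.
- exact: enum_finmem_uniq.
- exact: iota_uniq.
by move=> x; rewrite enum_finmemE.
Qed.

Lemma A_cc (R : realType) d (i : 'I_d) n : corner_cut R d (A i n).
Proof.
split.
  move=> a b /mem_A [h1 h2] hb; apply/mem_A; split.
    by move=> j hj; have := hb j; rewrite h1 // leqn0 => /eqP.
  exact: leq_ltn_trans (hb i) h2.
pose w := fun j : 'I_d => if j == i then 1%N else n.
exists (fun j => ((w j)%:R : R)), (n%:R - 2^-1); split.
  by exists i; rewrite /w eqxx oner_neq0.
have E1 a : (\sum_j w j * a j = a i + n * \sum_(j | j != i) a j)%N.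
  rewrite (bigD1 i) //= /w eqxx mul1n big_distrr /=; congr addn.
  by apply: eq_bigr => j /negbTE ->.
have h2 : (0 : R) < 2^-1 by rewrite invr_gt0 ltr0n.
have h2' : (2^-1 : R) < 1 by rewrite invf_lt1 ?ltr0n // ltr1n.
split=> a; rewrite lin_nat E1.
  move=> /mem_A [ha1 ha2].
  rewrite big1 ?muln0 ?addn0; last by move=> j; apply: ha1.
  have : ((a i).+1)%:R <= (n%:R : R) by rewrite ler_nat.
  rewrite -addn1 natrD; lra.
move=> ha.
have : (n <= a i + n * \sum_(j | j != i) a j)%N.
  case: (leqP n (a i)) => hai; first by apply: leq_trans hai (leq_addr _ _).
  case: (posnP (\sum_(j | j != i) a j)) => hs.
    exfalso; apply/negP: ha; rewrite negbK; apply/mem_A; split => // j hj.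
    by move/eqP: hs; rewrite sum_nat_eq0 => /forall_inP /(_ j hj) /eqP.
  by apply: leq_trans (leq_addl _ _); rewrite leq_pmulr.
rewrite -(ler_nat R); lra.
Qed.

Lemma axis_eq d (i : 'I_d) n (L : {fset exponent d}) :
  staircase L -> #|` L| = n ->
  (forall a, a \in L -> forall j, j != i -> a j = 0%N) -> L = A i n.
Proof.
move=> hst hc hax.
have hlt a : a \in L -> (a i < n)%N.
  move=> ha; rewrite -hc -[(a i).+1](card_A i); apply: fsubset_leq_card.
  apply/fsubsetP => b /mem_A [hb1 hb2]; apply: (hst a) => // j.
  case: (eqVneq j i) => [->|hj]; first by rewrite -ltnS.
  by rewrite hb1.
have hsub : L `<=` A i n.
  by apply/fsubsetP => a ha; apply/mem_A; split; [exact: hax | exact: hlt].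
apply/fsetP; apply/(fsubset_cardP _ _) => //; by rewrite card_A.
Qed.

Lemma sum_A d (i : 'I_d) n (j : 'I_d) :
  (\sum_(a <- A i n) a j)%N = if j == i then 'C(n, 2) else 0%N.
Proof.
rewrite big_imfset /=; last by move=> x y _ _; apply: ax_inj.
rewrite (perm_big (iota 0 n)); last first.
  by rewrite undup_id ?iota_uniq.
case: eqP => [->|/eqP hj].
  rewrite -bin2_sum /index_iota subn0; apply: eq_bigr => t _.
  by rewrite ffunE eqxx.
by rewrite big1 // => t _; rewrite ffunE (negbTE hj).
Qed.

Lemma alphabar_A (R : realType) d (i : 'I_d) n :
  alphabar R d (A i n) = ('C(n, 2))%:R *: delta_mx 0 i.
Proof.
apply/rowP => j; rewrite !mxE -natr_sum sum_A eqxx /=.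
by case: eqP => _; rewrite ?mulr1 ?mulr0.
Qed.

Lemma deg_min d m (L M : {fset exponent d}) :
  (forall a, (a \in L) = (deg a <= m)%N) -> #|` M| = #|` L| -> M != L ->
  (\sum_(a <- L) deg a < \sum_(a <- M) deg a)%N.
Proof.
move=> hL hc hne.
have -> : (\sum_(a <- L) deg a = \sum_(a <- L | a \in M) deg a + \sum_(a <- L | a \notin M) deg a)%N.
  by rewrite (bigID (fun a => a \in M)); congr addn; apply: eq_bigl.
have -> : (\sum_(a <- M) deg a = \sum_(a <- M | a \in L) deg a + \sum_(a <- M | a \notin L) deg a)%N.
  by rewrite (bigID (fun a => a \in L)); congr addn; apply: eq_bigl.
have hp : perm_eq [seq a <- L | a \in M] [seq a <- M | a \in L].
  apply: uniq_perm; rewrite ?filter_uniq ?fset_uniq // => x.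
  by rewrite !mem_filter andbC.
have -> : (\sum_(a <- L | a \in M) deg a = \sum_(a <- M | a \in L) deg a)%N.
  by rewrite -[LHS]big_filter -[RHS]big_filter (perm_big _ hp).
have hcnt : count (predC (mem L)) M = count (predC (mem M)) L.
  have hsz : size M = size L := hc.
  have h1 := count_predC (mem L) M; have h2 := count_predC (mem M) L.
  have h3 := perm_size hp; rewrite !size_filter in h3.
  have e1 : count (mem L) M = count (fun a => a \in L) M by [].
  have e2 : count (mem M) L = count (fun a => a \in M) L by [].
  rewrite e1 -h3 hsz -h2 -e2 in h1; lia.
set c := count (predC (mem L)) M.
have hc1 : (0 < c)%N.
  rewrite lt0n; apply/negP => /eqP hc0; move/negP: hne; apply.
  apply/eqP/fsetP => a; apply/idP/idP => ha.
    apply/negPn/negP => hna.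
    have : has (predC (mem L)) M by apply/hasP; exists a.
    by rewrite has_count -/c hc0.
  apply/negPn/negP => hna.
  have : has (predC (mem M)) L by apply/hasP; exists a.
  by rewrite has_count -hcnt -/c hc0.
have hX : (m.+1 * c <= \sum_(a <- M | a \notin L) deg a)%N.
  apply: (@leq_trans (\sum_(a <- M | a \notin L) m.+1)).
    by rewrite big_const_seq iter_addn_0.
  by apply: leq_sum => a ha; rewrite ltnNge -hL.
have hY : (\sum_(a <- L | a \notin M) deg a <= m * c)%N.
  apply: (@leq_trans (\sum_(a <- L | a \notin M) m)).
    rewrite big_seq_cond [X in (_ <= X)%N]big_seq_cond.
    by apply: leq_sum => a /andP [ha _]; rewrite -hL.
  by rewrite big_const_seq iter_addn_0 /c hcnt.
rewrite ltn_add2l; apply: leq_ltn_trans hY _; apply: leq_trans hX.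
by rewrite mulSn -addn1 addnC leq_add2r.
Qed.

Lemma ab_entry (R : realType) d (M : {fset exponent d}) j :
  alphabar R d M 0 j = ((\sum_(a <- M) a j)%N)%:R.
Proof. by rewrite mxE natr_sum. Qed.

Lemma in_CC_single (R : realType) n d (M : {fset exponent d}) :
  corner_cut R d M -> #|` M| = n -> in_CC R n d (alphabar R d M).
Proof.
move=> hcc hc; exists 1%N, (fun _ => M), (fun _ => 1).
split; first by [].
split; first by move=> _; exact: ler01.
by rewrite big_ord1 big_ord1 scale1r.
Qed.

Lemma rdot_ab (R : realType) d (M : {fset exponent d}) :
  rdot (const_mx 1) (alphabar R d M) = ((\sum_(a <- M) deg a)%N)%:R.
Proof.
rewrite /rdot.
transitivity (\sum_(i < d) \sum_(a <- M) ((a i)%:R : R)).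
  by apply: eq_bigr => i _; rewrite !mxE mul1r.
rewrite exchange_big /= natr_sum; apply: eq_bigr => a _.
by rewrite /deg natr_sum.
Qed.

Lemma rdot_comb (R : realType) d m (w : 'I_m -> R) (V : 'I_m -> 'rV[R]_d) :
  rdot (const_mx 1) (\sum_(l < m) w l *: V l) =
  \sum_(l < m) w l * rdot (const_mx 1) (V l).
Proof.
rewrite /rdot.
transitivity (\sum_(i < d) \sum_(l < m) w l * V l 0 i).
  apply: eq_bigr => i _; rewrite !mxE mul1r summxE.
  by apply: eq_bigr => l _; rewrite mxE.
rewrite exchange_big /=; apply: eq_bigr => l _.
rewrite big_distrr /=; apply: eq_bigr => i _.
by rewrite !mxE mul1r.
Qed.

Lemma ab_ge0 (R : realType) d (M : {fset exponent d}) j : 0 <= alphabar R d M 0 j.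
Proof. by rewrite ab_entry ler0n. Qed.

Lemma comb_entry (R : realType) d m (w : 'I_m -> R) (V : 'I_m -> 'rV[R]_d) j :
  (\sum_(l < m) w l *: V l) 0 j = \sum_(l < m) w l * V l 0 j.
Proof. by rewrite summxE; apply: eq_bigr => l _; rewrite mxE. Qed.

Theorem lemma2 (R : realType) (n d : nat) (hn : (1 <= n)%N) (hd : (1 <= d)%N) :
  (forall (i : 'I_d) (x : 'rV[R]_d),
      (in_CC R n d x /\ (forall j : 'I_d, j != i -> x 0 j = 0)) <->
      x = ('C(n, 2))%:R *: delta_mx 0 i)
  /\
  (forall k : nat, (1 <= k)%N -> n = 'C(k + d - 1, d) ->
     exists L : {fset exponent d},
       (forall a : exponent d, a \in L <-> (\sum_(i < d) a i <= k - 1)%N) /\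
       corner_cut R d L /\ #|` L| = n /\ is_vertex_CC R n d (alphabar R d L)).
Proof.
split.
  move=> i x; split.
    case=> [[m [Ls [w [hL [hw [hs hx]]]]]] hz].
    set V := ('C(n,2))%:R *: delta_mx 0 i.
    have key l : w l != 0 -> alphabar R d (Ls l) = V.
      move=> hwl; have [[hst _] hc] := hL l.
      rewrite /V -alphabar_A; congr alphabar; apply: axis_eq => // a ha j hj.
      have hx0 := hz j hj; rewrite hx comb_entry in hx0.
      have h0 := psumr_eq0P (fun l _ => mulr_ge0 (hw l) (ab_ge0 R (Ls l) j)) hx0.
      move: (h0 l isT) => /eqP; rewrite mulf_eq0 (negbTE hwl) /= ab_entry pnatr_eq0.
      rewrite sum_nat_seq_eq0 => /allP /(_ a ha) /eqP; exact.
    rewrite hx; transitivity (\sum_(l < m) w l *: V).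
      apply: eq_bigr => l _; case: (eqVneq (w l) 0) => [->|h].
        by rewrite !scale0r.
      by rewrite key.
    by rewrite -scaler_suml hs scale1r.
  move=> ->; split.
    rewrite -alphabar_A; apply: in_CC_single; [exact: A_cc | exact: card_A].
  by move=> j hj; rewrite !mxE (negbTE hj) andbF mulr0.
move=> k hk hn'; exists (simplex d (k - 1)).
set S := simplex d (k - 1).
have hmem a : (a \in S) = (deg a <= k - 1)%N by rewrite mem_simplex.
have hcc := simplex_cc R (k - 1) hd.
have hcard : #|` S| = n.
  by rewrite card_simplex hn'; congr binomial; lia.
split; first by move=> a; rewrite hmem.
split => //; split => //; split; first exact: in_CC_single.
exists (const_mx 1) => x [m [Ls [w [hL [hw [hs hx]]]]]] hne.
set f0 := ((\sum_(a <- S) deg a)%N)%:R : R.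
have hv : rdot (const_mx 1) (alphabar R d S) = f0 by rewrite rdot_ab.
have hle l : f0 <= rdot (const_mx 1) (alphabar R d (Ls l)).
  rewrite rdot_ab ler_nat; case: (eqVneq (Ls l) S) => [->//|hneq].
  apply: ltnW; apply: (deg_min hmem) => //.
  by rewrite (hL l).2 hcard.
rewrite hv hx rdot_comb.
case: (boolP [exists l, (w l != 0) && (Ls l != S)]).
  case/existsP => l0 /andP [hw0 hL0].
  have hgt : f0 < rdot (const_mx 1) (alphabar R d (Ls l0)).
    rewrite rdot_ab ltr_nat; apply: (deg_min hmem) => //.
    by rewrite (hL l0).2 hcard.
  have -> : f0 = \sum_(l < m) w l * f0 by rewrite -big_distrl /= hs mul1r.
  rewrite -subr_gt0 -sumrB (bigD1 l0) //=.
  have t1 : 0 < w l0 * rdot (const_mx 1) (alphabar R d (Ls l0)) - w l0 * f0.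
    rewrite -mulrBr; apply: mulr_gt0; first by rewrite lt_def hw0 hw.
    by rewrite subr_gt0.
  have t2 : 0 <= \sum_(l < m | l != l0)
      (w l * rdot (const_mx 1) (alphabar R d (Ls l)) - w l * f0).
    apply: sumr_ge0 => l _; rewrite -mulrBr; apply: mulr_ge0 => //.
    by rewrite subr_ge0.
  lra.
move/existsPn => hall; exfalso; move/negP: hne; apply; apply/eqP.
rewrite hx; transitivity (\sum_(l < m) w l *: alphabar R d S).
  apply: eq_bigr => l _; move: (hall l); rewrite negb_and !negbK.
  by case/orP => [/eqP ->|/eqP ->]; rewrite ?scale0r.
by rewrite -scaler_suml hs scale1r.
Qed.
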